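(* Let $\widetilde C$ be an $\mathcal S$-complex over $R$ and $n\in\mathbb Z$. Then the dual of the $\mathcal S$-complex $\Sigma^n\widetilde C$ is isomorphic to $\Sigma^{-n}\widetilde C^\dagger$.
   Context: Let $R$ be a commutative ring; graded modules are $\mathbb Z$-graded, $V[i]_j=V_{i+j}$, differentials have degree $-1$, and $\epsilon$ is the sign map ($(-1)^i$ on degree $i$). An $\mathcal S$-complex over $R$ is a chain complex $(\widetilde C,\widetilde d)$ of finitely generated free graded $R$-modules with a graded decomposition $\widetilde C=C\oplus C[-1]\oplus\mathsf R$ in which $\widetilde d=\begin{pmatrix} d&0&0\\ v&-d&\delta_2\\ \delta_1&0&r\end{pmatrix}$; $\chi$ is the degree $1$ map sending $C$ identically onto $C[-1]$ and zero on $C[-1]\oplus\mathsf R$. An isomorphism of $\mathcal S$-complexes is a degree $0$ chain isomorphism commuting with the $\chi$'s. Duals: for a graded $R$-module $V$, $V^\dagger=\mathrm{Hom}_R(V,R)$, where a homogeneous $f:V_i\to R$ has degree $-i$; for a map $m:V\to W$, $m^\dagger:W^\dagger\to V^\dagger$ is $m^\dagger(f)=-\epsilon(f)\,f\circ m$. The dual $\mathcal S$-complex $\widetilde C^\dagger$ is $(\widetilde C^\dagger,\widetilde d^\dagger,\chi^\dagger)$, with decomposition $C^\dagger\oplus C^\dagger[-1]\oplus\mathsf R^\dagger$ and differential $\begin{pmatrix} d^\dagger&0&0\\ v^\dagger&-d^\dagger&\delta_1^\dagger\\ \delta_2^\dagger&0&r^\dagger\end{pmatrix}$. The suspension $\Sigma\widetilde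 C$ is $C_\Sigma\oplus C_\Sigma[-1]\oplus\mathsf R$, $C_\Sigma=C[-2]\oplus\mathsf R[-1]$, with differential, in the ordered summands $C[-2],\mathsf R[-1],C[-3],\mathsf R[-2],\mathsf R$, $\begin{pmatrix} d&-\delta_2&0&0&0\\ 0&-r&0&0&0\\ v&0&-d&\delta_2&v\delta_2\\ \delta_1&0&0&r&\delta_1\delta_2\\ 0&1&0&0&r\end{pmatrix}$. The negative suspension $\Sigma^{-1}\widetilde C$ is $C_{\Sigma^{-1}}\oplus C_{\Sigma^{-1}}[-1]\oplus\mathsf R$, $C_{\Sigma^{-1}}=C[2]\oplus\mathsf R[2]$, with differential, in the ordered summands $C[2],\mathsf R[2],C[1],\mathsf R[1],\mathsf R$, $\begin{pmatrix} d&0&0&0&0\\ \delta_1&r&0&0&0\\ v&\delta_2&-d&0&0\\ 0&0&-\delta_1&-r&1\\ \delta_1v&\delta_1\delta_2&0&0&r\end{pmatrix}$. For $n>0$, $\Sigma^n$ is the $n$-fold iterate of $\Sigma$, $\Sigma^{-n}$ the $n$-fold iterate of $\Sigma^{-1}$, and $\Sigma^0$ the identity. *)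

(* Defs.v *)
(* Concrete encoding of S-complexes over a commutative ring R:
   a finitely generated free graded R-module is given by a homogeneous basis,
   i.e. a rank n and a degree function 'I_n -> int; graded maps are matrices
   (column-vector convention: M i j = coefficient of the i-th target basis
   vector in the image of the j-th source basis vector). *)
From mathcomp Require Import all_boot all_order all_algebra.
Set Implicit Arguments. Unset Strict Implicit. Unset Printing Implicit Defensive.
Import Order.TTheory GRing.Theory Num.Theory.
Local Open Scope ring_scope.

Section SComplex.
Variable R : comPzRingType.

Definition eps (t : int) : R := (-1) ^+ `|t|%N.

Definition homog {m n : nat} (ds : 'I_m -> int) (dt : 'I_n -> int) (k : int)
  (M : 'M[R]_(n, m)) : Prop :=
  forall i j, M i j != 0 -> dt i = ds j + k.

(* dual of a map m : V -> W (W with degrees dt), m^dagger(f) = - eps(f) f o m,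
   written in the dual bases (the dual basis vector of a basis vector of degree t
   has degree -t). *)
Definition dualmx {n m : nat} (dt : 'I_n -> int) (M : 'M[R]_(n, m)) : 'M[R]_(m, n) :=
  \matrix_(j, i) (- eps (- dt i) * M i j).

(* graded module with a degree -1 endomorphism and a degree 1 endomorphism chi:
   the data (C~, d~, chi) of an S-complex, forgetting the decomposition *)
Record gcx := GCx { gn : nat; gdeg : 'I_gn -> int; gd : 'M[R]_gn; gchi : 'M[R]_gn }.

(* S-complex data: decomposition C~ = C (+) C[-1] (+) R with the five maps
   d : C -> C, v : C -> C[-1], delta1 : C -> R, delta2 : R -> C[-1], r : R -> R *)
Record Sdat := SDat {
  nC : nat; nR : nat;
  cdeg : 'I_nC -> int; rdeg : 'I_nR -> int;
  sd : 'M[R]_nC; sv : 'M[R]_nC;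
  sdel1 : 'M[R]_(nR, nC); sdel2 : 'M[R]_(nC, nR); sr : 'M[R]_nR }.

(* degrees of C~ = C (+) C[-1] (+) R ;  V[i]_j = V_(i+j), so a basis vector of
   degree t in C has degree t+1 in C[-1] *)
Definition tdeg (X : Sdat) (i : 'I_(nC X + nC X + nR X)) : int :=
  match split i with
  | inl j => match split j with inl a => cdeg a | inr b => cdeg b + 1 end
  | inr k => rdeg k
  end.

Definition dtot (X : Sdat) : 'M[R]_(nC X + nC X + nR X) :=
  block_mx (block_mx (sd X) 0 (sv X) (- sd X)) (col_mx 0 (sdel2 X))
           (row_mx (sdel1 X) 0) (sr X).

Definition chitot (X : Sdat) : 'M[R]_(nC X + nC X + nR X) :=
  block_mx (block_mx 0 0 1%:M 0) 0 0 0.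

Definition tot (X : Sdat) : gcx := GCx (@tdeg X) (dtot X) (chitot X).

Definition is_Scomplex (X : Sdat) : Prop :=
  homog (@tdeg X) (@tdeg X) (-1) (dtot X) /\ dtot X *m dtot X = 0.

Definition S_iso (A B : gcx) : Prop :=
  exists (P : 'M[R]_(gn B, gn A)) (Q : 'M[R]_(gn A, gn B)),
    [/\ P *m Q = 1%:M, Q *m P = 1%:M, homog (@gdeg A) (@gdeg B) 0 P,
        P *m gd A = gd B *m P & P *m gchi A = gchi B *m P].

Definition dualT (G : gcx) : gcx :=
  GCx (fun i => - gdeg i) (dualmx (@gdeg G) (gd G)) (dualmx (@gdeg G) (gchi G)).

(* the dual S-complex, with its decomposition C' (+) C'[-1] (+) R^dagger where
   C' = (C[-1])^dagger (written C^dagger in the paper), and C'[-1] is identified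
   with C^dagger through chi^dagger (matrix Emx below).  Its blocks are the blocks
   of d~^dagger transported along this identification. *)
Definition cs (X : Sdat) (j : 'I_(nC X)) : int := cdeg j + 1.

Definition Emx (X : Sdat) : 'M[R]_(nC X) :=
  diag_mx (\row_j (- eps (- cs j))).

Definition dualS (X : Sdat) : Sdat :=
  @SDat (nC X) (nR X) (fun j => - (cdeg j + 1)) (fun k => - rdeg k)
    (dualmx (@cs X) (- sd X))
    (Emx X *m dualmx (@cs X) (sv X))
    (dualmx (@cs X) (sdel2 X))
    (Emx X *m dualmx (@rdeg X) (sdel1 X))
    (dualmx (@rdeg X) (sr X)).

(* suspension: C_Sigma = C[-2] (+) R[-1] *)
Definition Sigma (X : Sdat) : Sdat :=
  @SDat (nC X + nR X) (nR X)
    (fun i => match split i with inl a => cdeg a + 2 | inr k => rdeg k + 1 end)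
    (@rdeg X)
    (block_mx (sd X) (- sdel2 X) 0 (- sr X))
    (block_mx (sv X) 0 (sdel1 X) 0)
    (row_mx 0 1%:M)
    (col_mx (sv X *m sdel2 X) (sdel1 X *m sdel2 X))
    (sr X).

(* negative suspension: C_Sigma^-1 = C[2] (+) R[2] *)
Definition SigmaInv (X : Sdat) : Sdat :=
  @SDat (nC X + nR X) (nR X)
    (fun i => match split i with inl a => cdeg a - 2 | inr k => rdeg k - 2 end)
    (@rdeg X)
    (block_mx (sd X) 0 (sdel1 X) (sr X))
    (block_mx (sv X) (sdel2 X) 0 0)
    (row_mx (sdel1 X *m sv X) (sdel1 X *m sdel2 X))
    (col_mx 0 1%:M)
    (sr X).

Definition SigmaZ (n : int) (X : Sdat) : Sdat :=
  match n with
  | Posz k => iter k Sigma X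
  | Negz k => iter k.+1 SigmaInv X
  end.

End SComplex.

(* Main.v *)
Require Import Defs.
From mathcomp Require Import all_boot all_order all_algebra.
From mathcomp Require Import zify ring.
Set Implicit Arguments. Unset Strict Implicit. Unset Printing Implicit Defensive.
Import Order.TTheory GRing.Theory Num.Theory.
Local Open Scope ring_scope.

Section S.
Variable R : comPzRingType.

Lemma epsN (t : int) : eps R (- t) = eps R t.
Proof. by rewrite /eps abszN. Qed.

Lemma epsS (t : int) : eps R (t + 1) = - eps R t.
Proof.
rewrite /eps; case: t => n.
  by rewrite -PoszD absz_nat addn1 exprS mulN1r.
case: n => [|n].
  by rewrite /= subnn expr0 expr1 opprK.
have -> : Negz n.+1 + 1 = Negz n by rewrite !NegzE; lia.
by rewrite !NegzE !abszN !absz_nat [in RHS]exprS mulN1r opprK.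
Qed.

Lemma epsM2 (t : int) : eps R (t - 2) = eps R t.
Proof.
have {2}-> : t = (t - 2) + 1 + 1 by lia.
by rewrite !epsS opprK.
Qed.

Lemma epsK (t : int) : eps R t * eps R t = 1.
Proof. by rewrite /eps -expr2 sqrr_sign. Qed.

Definition sgn n (f : 'I_n -> int) : 'M[R]_n := diag_mx (\row_i eps R (f i)).

Lemma sgnK n (f : 'I_n -> int) : sgn f *m sgn f = 1%:M.
Proof.
apply/matrixP => i j; rewrite mul_diag_mx !mxE mulrnAr epsK.
by case: eqP.
Qed.

Lemma tr_sgn n (f : 'I_n -> int) : (sgn f)^T = sgn f.
Proof. exact: tr_diag_mx. Qed.

Lemma sgn_ext n (f g : 'I_n -> int) : (forall i, eps R (f i) = eps R (g i)) -> sgn f = sgn g.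
Proof. by move=> H; apply/matrixP => i j; rewrite !mxE H. Qed.

Lemma sgnS n (f : 'I_n -> int) : sgn (fun i => f i + 1) = - sgn f.
Proof. by apply/matrixP => i j; rewrite !mxE epsS mulNrn. Qed.

Lemma splitL m n (i : 'I_m) : split (lshift n i) = inl i.
Proof. exact: (unsplitK (inl _ i)). Qed.
Lemma splitR m n (i : 'I_n) : split (rshift m i) = inr i.
Proof. exact: (unsplitK (inr _ i)). Qed.

Lemma sgn_block n1 n2 (f1 : 'I_n1 -> int) (f2 : 'I_n2 -> int) :
  sgn (fun i => match split i with inl a => f1 a | inr b => f2 b end)
  = block_mx (sgn f1) 0 0 (sgn f2).
Proof.
apply/matrixP => i j; rewrite -[i]splitK -[j]splitK.
case: (split i) => a; case: (split j) => b /=.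
- by rewrite block_mxEul !mxE eq_lshift splitL.
- by rewrite block_mxEur !mxE eq_lrshift.
- by rewrite block_mxEdl !mxE eq_rlshift.
- by rewrite block_mxEdr !mxE eq_rshift splitR.
Qed.

Lemma dualmxE n m (dt : 'I_n -> int) (M : 'M[R]_(n, m)) :
  dualmx dt M = - (M^T *m sgn dt).
Proof.
apply/matrixP => j i; rewrite /dualmx mul_mx_diag !mxE epsN.
by rewrite mulNr mulrC.
Qed.

Lemma EmxE (X : Sdat R) : Emx X = sgn (@cdeg R X).
Proof.
apply/matrixP => i j; rewrite !mxE /cs epsN epsS opprK //.
Qed.

Lemma homog_ext m n (ds ds' : 'I_m -> int) (dt dt' : 'I_n -> int) k (M : 'M[R]_(n, m)) :
  (forall j, ds j = ds' j) -> (forall i, dt i = dt' i) -> homog ds dt k M -> homog ds' dt' k M.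
Proof. by move=> E1 E2 H i j /H; rewrite E1 E2. Qed.

Lemma homog0 m n (ds : 'I_m -> int) (dt : 'I_n -> int) k : homog ds dt k (0 : 'M[R]_(n, m)).
Proof. by move=> i j; rewrite mxE eqxx. Qed.

Lemma homog_diag n (ds dt : 'I_n -> int) k (v : 'rV[R]_n) :
  (forall i, dt i = ds i + k) -> homog ds dt k (diag_mx v).
Proof.
move=> E i j; rewrite mxE; have [->|ne] := eqVneq i j; first by rewrite E.
by rewrite mulr0n eqxx.
Qed.

Lemma homog_scalar n (ds dt : 'I_n -> int) k (a : R) :
  (forall i, dt i = ds i + k) -> homog ds dt k (a%:M : 'M[R]_n).
Proof. by move=> E; rewrite -diag_const_mx; apply: homog_diag. Qed.

Lemma homog_sh m n (ds : 'I_m -> int) (dt : 'I_n -> int) k c (M : 'M[R]_(n, m)) :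
  homog ds dt k M -> homog (fun j => ds j + c) (fun i => dt i + c) k M.
Proof. by move=> H i j /H ->; lia. Qed.

Lemma homog_block m1 m2 n1 n2 (ds1 : 'I_m1 -> int) (ds2 : 'I_m2 -> int)
  (dt1 : 'I_n1 -> int) (dt2 : 'I_n2 -> int) k
  (A : 'M[R]_(n1, m1)) (B : 'M[R]_(n1, m2)) (C : 'M[R]_(n2, m1)) (D : 'M[R]_(n2, m2)) :
  homog ds1 dt1 k A -> homog ds2 dt1 k B -> homog ds1 dt2 k C -> homog ds2 dt2 k D ->
  homog (fun j => match split j with inl a => ds1 a | inr b => ds2 b end)
        (fun i => match split i with inl a => dt1 a | inr b => dt2 b end) k (block_mx A B C D).
Proof.
move=> hA hB hC hD i j; rewrite -[i]splitK -[j]splitK.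
case: (split i) => a; case: (split j) => b /=.
- by rewrite block_mxEul !splitL; apply: hA.
- by rewrite block_mxEur splitL splitR; apply: hB.
- by rewrite block_mxEdl splitL splitR; apply: hC.
- by rewrite block_mxEdr !splitR; apply: hD.
Qed.

Lemma homog_mul m p n (ds : 'I_m -> int) (dm : 'I_p -> int) (dt : 'I_n -> int)
  (M1 : 'M[R]_(p, m)) (M2 : 'M[R]_(n, p)) :
  homog ds dm 0 M1 -> homog dm dt 0 M2 -> homog ds dt 0 (M2 *m M1).
Proof.
move=> h1 h2 i j; rewrite mxE; have [//|/eqP ne] := eqVneq (dt i) (ds j + 0).
rewrite big1 ?eqxx // => k _.
have [z2|/h2 e2] := eqVneq (M2 i k) 0; first by rewrite z2 mul0r.
have [z1|/h1 e1] := eqVneq (M1 k j) 0; first by rewrite z1 mulr0.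
by exfalso; apply: ne; rewrite e2 e1 !addr0.
Qed.

Lemma parity m n (ds : 'I_m -> int) (dt : 'I_n -> int) k (s : R) (M : 'M[R]_(n, m)) :
  homog ds dt k M -> (forall j, eps R (ds j + k) = s * eps R (ds j)) ->
  sgn dt *m M = s *: (M *m sgn ds).
Proof.
move=> H E; apply/matrixP => i j; rewrite mul_diag_mx mul_mx_diag !mxE.
have [->|/(H i j) ->] := eqVneq (M i j) 0; first by rewrite !(mul0r, mulr0).
by rewrite E mulrCA mulrC.
Qed.


Lemma trN m n (A : 'M[R]_(m, n)) : (- A)^T = - A^T.
Proof. by apply/matrixP => i j; rewrite !mxE. Qed.

Definition good (X : Sdat R) :=
  let e := sgn (@cdeg R X) in let f := sgn (@rdeg R X) in
  [/\ e *m sd X = - (sd X *m e), e *m sv X = sv X *m e,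
      e *m sdel2 X = sdel2 X *m f, f *m sdel1 X = - (sdel1 X *m e)
    & f *m sr X = - (sr X *m f)].

Lemma epsSm1 (t : int) : eps R (t + -1) = -1 * eps R t.
Proof.
have E : t + -1 + 1 = t by lia.
by rewrite -[in RHS]E epsS mulN1r opprK.
Qed.

Lemma good_of (X : Sdat R) : is_Scomplex X -> good X.
Proof.
case=> H _.
have hd : homog (@cdeg R X) (@cdeg R X) (-1) (sd X).
  move=> a b nz; have := H (lshift _ (lshift _ a)) (lshift _ (lshift _ b)).
  by rewrite /tdeg !splitL /dtot !block_mxEul; apply.
have hv : homog (@cdeg R X) (fun a => @cdeg R X a + 1) (-1) (sv X).
  move=> a b nz; have := H (lshift _ (rshift _ a)) (lshift _ (lshift _ b)).
  by rewrite /tdeg !splitL splitR /dtot !block_mxEul block_mxEdl; apply.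
have h2 : homog (@rdeg R X) (fun a => @cdeg R X a + 1) (-1) (sdel2 X).
  move=> a b nz; have := H (lshift _ (rshift _ a)) (rshift _ b).
  by rewrite /tdeg !splitL !splitR /dtot block_mxEur col_mxEd; apply.
have h1 : homog (@cdeg R X) (@rdeg R X) (-1) (sdel1 X).
  move=> a b nz; have := H (rshift _ a) (lshift _ (lshift _ b)).
  by rewrite /tdeg !splitL !splitR /dtot block_mxEdl row_mxEl; apply.
have hr : homog (@rdeg R X) (@rdeg R X) (-1) (sr X).
  move=> a b nz; have := H (rshift _ a) (rshift _ b).
  by rewrite /tdeg !splitR /dtot block_mxEdr; apply.
split.
- by rewrite (parity hd (fun j => epsSm1 _)) scaleN1r.
- have := parity hv (fun j => epsSm1 _); rewrite sgnS scaleN1r mulNmx.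
  by move/oppr_inj.
- have := parity h2 (fun j => epsSm1 _); rewrite sgnS scaleN1r mulNmx.
  by move/oppr_inj.
- by rewrite (parity h1 (fun j => epsSm1 _)) scaleN1r.
- by rewrite (parity hr (fun j => epsSm1 _)) scaleN1r.
Qed.


Definition SI (X Y : Sdat R) : Prop :=
  exists (A : 'M[R]_(nC Y, nC X)) (A' : 'M[R]_(nC X, nC Y))
         (B : 'M[R]_(nR Y, nR X)) (B' : 'M[R]_(nR X, nR Y)),
  [/\ A *m A' = 1%:M, A' *m A = 1%:M, B *m B' = 1%:M, B' *m B = 1%:M &
      [/\ homog (@cdeg R X) (@cdeg R Y) 0 A, homog (@rdeg R X) (@rdeg R Y) 0 B &
      [/\ A *m sd X = sd Y *m A, A *m sv X = sv Y *m A,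
          B *m sdel1 X = sdel1 Y *m A, A *m sdel2 X = sdel2 Y *m B
        & B *m sr X = sr Y *m B]]].

Lemma mulmxN' m n p (A : 'M[R]_(m, n)) (B : 'M[R]_(n, p)) : A *m (- B) = - (A *m B).
Proof. exact: mulmxN. Qed.
Lemma mulNmx' m n p (A : 'M[R]_(m, n)) (B : 'M[R]_(n, p)) : (- A) *m B = - (A *m B).
Proof. exact: mulNmx. Qed.

Ltac simp := rewrite ?(mulmx_block, mul_block_col, mul_row_block, mul_mx_row,
  mul_col_mx, mul_row_col, mul_col_row, mulmx0, mul0mx, addr0, add0r,
  mulmx1, mul1mx, col_mx0, row_mx0, opp_block_mx, opp_row_mx, opp_col_mx, mulmxN', mulNmx', oppr0, opprK, trmx0, trmx1, trN,
  tr_block_mx, tr_row_mx, tr_col_mx).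

Lemma SI_tot X Y : SI X Y -> S_iso (tot X) (tot Y).
Proof.
case=> A [A'] [B] [B'] [AA' A'A BB' B'B [hA hB [Ed Ev E1 E2 Er]]].
exists (block_mx (block_mx A 0 0 A) 0 0 B), (block_mx (block_mx A' 0 0 A') 0 0 B').
split.
- by simp; rewrite AA' BB' -!scalar_mx_block.
- by simp; rewrite A'A B'B -!scalar_mx_block.
- exact: (homog_block (homog_block hA (homog0 _ _ _) (homog0 _ _ _) (homog_sh 1 hA))
     (homog0 _ _ _) (homog0 _ _ _) hB).
- by rewrite /= /dtot; simp; rewrite Ed Ev E1 E2 Er.
- by rewrite /= /chitot; simp.
Qed.


Lemma SI_trans X Y Z : SI X Y -> SI Y Z -> SI X Z.
Proof.
case=> A [A'] [B] [B'] [AA' A'A BB' B'B [hA hB [Ed Ev E1 E2 Er]]].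
case=> C [C'] [D] [D'] [CC' C'C DD' D'D [hC hD [Fd Fv F1 F2 Fr]]].
exists (C *m A), (A' *m C'), (D *m B), (B' *m D'); split.
- by rewrite mulmxA -(mulmxA C) AA' mulmx1 CC'.
- by rewrite mulmxA -(mulmxA A') C'C mulmx1 A'A.
- by rewrite mulmxA -(mulmxA D) BB' mulmx1 DD'.
- by rewrite mulmxA -(mulmxA B') D'D mulmx1 B'B.
split; [exact: homog_mul hA hC | exact: homog_mul hB hD |].
split.
- by rewrite -mulmxA Ed !mulmxA Fd.
- by rewrite -mulmxA Ev !mulmxA Fv.
- by rewrite -mulmxA E1 !mulmxA F1.
- by rewrite -mulmxA E2 !mulmxA F2.
- by rewrite -mulmxA Er !mulmxA Fr.
Qed.

Lemma SI_Sigma X Y : SI X Y -> SI (Sigma X) (Sigma Y).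
Proof.
case=> A [A'] [B] [B'] [AA' A'A BB' B'B [hA hB [Ed Ev E1 E2 Er]]].
exists (block_mx A 0 0 B), (block_mx A' 0 0 B'), B, B'; split => //.
- by simp; rewrite AA' BB' -scalar_mx_block.
- by simp; rewrite A'A B'B -scalar_mx_block.
split.
- exact: (homog_block (homog_sh 2 hA) (homog0 _ _ _) (homog0 _ _ _) (homog_sh 1 hB)).
- exact: hB.
rewrite /=; split; simp.
- by rewrite Ed E2 Er.
- by rewrite Ev E1.
- by [].
- by rewrite !mulmxA Ev E1 -!mulmxA E2.
- exact: Er.
Qed.

Lemma SI_SigmaInv X Y : SI X Y -> SI (SigmaInv X) (SigmaInv Y).
Proof.
case=> A [A'] [B] [B'] [AA' A'A BB' B'B [hA hB [Ed Ev E1 E2 Er]]].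
exists (block_mx A 0 0 B), (block_mx A' 0 0 B'), B, B'; split => //.
- by simp; rewrite AA' BB' -scalar_mx_block.
- by simp; rewrite A'A B'B -scalar_mx_block.
split.
- exact: (homog_block (homog_sh (-2) hA) (homog0 _ _ _) (homog0 _ _ _) (homog_sh (-2) hB)).
- exact: hB.
rewrite /=; split; simp.
- by rewrite Ed E1 Er.
- by rewrite Ev E2.
- by rewrite !mulmxA E1 -!mulmxA Ev E2.
- by [].
- exact: Er.
Qed.


Lemma sgn_Sigma X : sgn (@cdeg R (Sigma X)) = block_mx (sgn (@cdeg R X)) 0 0 (- sgn (@rdeg R X)).
Proof.
rewrite /= sgn_block -sgnS; congr block_mx.
by apply: sgn_ext => i; rewrite -epsM2; congr eps; lia.
Qed.

Lemma sgn_SigmaInv X : sgn (@cdeg R (SigmaInv X)) = block_mx (sgn (@cdeg R X)) 0 0 (sgn (@rdeg R X)).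
Proof.
rewrite /= sgn_block; congr block_mx; apply: sgn_ext => i; exact: epsM2.
Qed.

Lemma good_Sigma X : good X -> good (Sigma X).
Proof.
case=> G1 G2 G3 G4 G5.
rewrite /good sgn_Sigma /=; split; simp.
- by rewrite G1 G3 G5.
- by rewrite G2 G4 opprK.
- by rewrite !mulmxA G2 G4 mulNmx' opprK -!mulmxA G3.
- by [].
- exact: G5.
Qed.

Lemma good_SigmaInv X : good X -> good (SigmaInv X).
Proof.
case=> G1 G2 G3 G4 G5.
rewrite /good sgn_SigmaInv /=; split; simp.
- by rewrite G1 G4 G5.
- by rewrite G2 G3.
- by [].
- by rewrite !mulmxA G4 !mulNmx' -!mulmxA G2 G3 !mulmxA.
- exact: G5.
Qed.


Section Proj.
Variable X : Sdat R.
Let e := sgn (@cdeg R X).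
Let f := sgn (@rdeg R X).
Lemma dS_d : sd (dualS X) = - ((sd X)^T *m e).
Proof. by rewrite /= dualmxE /cs sgnS trN !(mulmxN', mulNmx', opprK). Qed.
Lemma dS_v : sv (dualS X) = e *m ((sv X)^T *m e).
Proof. by rewrite /= EmxE dualmxE /cs sgnS !(mulmxN', mulNmx', opprK). Qed.
Lemma dS_1 : sdel1 (dualS X) = (sdel2 X)^T *m e.
Proof. by rewrite /= dualmxE /cs sgnS !(mulmxN', mulNmx', opprK). Qed.
Lemma dS_2 : sdel2 (dualS X) = - (e *m ((sdel1 X)^T *m f)).
Proof. by rewrite /= EmxE dualmxE mulmxN'. Qed.
Lemma dS_r : sr (dualS X) = - ((sr X)^T *m f).
Proof. by rewrite /= dualmxE. Qed.
Lemma dS_e : sgn (@cdeg R (dualS X)) = - e.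
Proof. by rewrite -sgnS; apply: sgn_ext => i /=; rewrite epsN. Qed.
Lemma dS_f : sgn (@rdeg R (dualS X)) = f.
Proof. by apply: sgn_ext => i /=; rewrite epsN. Qed.

Lemma Sg_d : sd (Sigma X) = block_mx (sd X) (- sdel2 X) 0 (- sr X). Proof. by []. Qed.
Lemma Sg_v : sv (Sigma X) = block_mx (sv X) 0 (sdel1 X) 0. Proof. by []. Qed.
Lemma Sg_1 : sdel1 (Sigma X) = row_mx 0 1%:M. Proof. by []. Qed.
Lemma Sg_2 : sdel2 (Sigma X) = col_mx (sv X *m sdel2 X) (sdel1 X *m sdel2 X). Proof. by []. Qed.
Lemma Sg_r : sr (Sigma X) = sr X. Proof. by []. Qed.
Lemma Sg_f : sgn (@rdeg R (Sigma X)) = f. Proof. by []. Qed.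
Lemma Si_d : sd (SigmaInv X) = block_mx (sd X) 0 (sdel1 X) (sr X). Proof. by []. Qed.
Lemma Si_v : sv (SigmaInv X) = block_mx (sv X) (sdel2 X) 0 0. Proof. by []. Qed.
Lemma Si_1 : sdel1 (SigmaInv X) = row_mx (sdel1 X *m sv X) (sdel1 X *m sdel2 X). Proof. by []. Qed.
Lemma Si_2 : sdel2 (SigmaInv X) = col_mx 0 1%:M. Proof. by []. Qed.
Lemma Si_r : sr (SigmaInv X) = sr X. Proof. by []. Qed.
Lemma Si_f : sgn (@rdeg R (SigmaInv X)) = f. Proof. by []. Qed.
End Proj.

Ltac proj := rewrite ?(dS_d, dS_v, dS_1, dS_2, dS_r, dS_e, dS_f);
  rewrite ?(Sg_d, Sg_v, Sg_1, Sg_2, Sg_r, Sg_f, Si_d, Si_v, Si_1, Si_2, Si_r, Si_f, sgn_Sigma, sgn_SigmaInv);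
  rewrite ?(dS_d, dS_v, dS_1, dS_2, dS_r, dS_e, dS_f).

Lemma SI_dSigma Y : SI (dualS (Sigma Y)) (SigmaInv (dualS Y)).
Proof.
exists 1%:M, 1%:M, 1%:M, 1%:M; split; rewrite ?mulmx1 //.
split.
- by apply: homog_scalar => i /=; case: (split i) => a; lia.
- by apply: homog_scalar => i /=; lia.
split; rewrite ?mulmx1 ?mul1mx; proj; simp.
- by [].
- by rewrite [RHS]block_mxEv row_mx0.
- by rewrite !trmx_mul !mulmxA -!(mulmxA _ (sgn _) (sgn _)) !sgnK !mulmx1.
- by rewrite sgnK.
- by [].
Qed.


Lemma SI_dSigmaInv Y : good Y -> SI (dualS (SigmaInv Y)) (Sigma (dualS Y)).
Proof.
case=> G1 G2 G3 G4 G5.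
have G4t := congr1 trmx G4; rewrite trN !trmx_mul !tr_sgn in G4t.
have G5t := congr1 trmx G5; rewrite trN !trmx_mul !tr_sgn in G5t.
exists (block_mx 1%:M 0 0 (sgn (@rdeg R Y))), (block_mx 1%:M 0 0 (sgn (@rdeg R Y))), 1%:M, 1%:M; split; rewrite ?mulmx1 //.
- simp; rewrite sgnK; exact: (esym (scalar_mx_block _ _ _)).
- simp; rewrite sgnK; exact: (esym (scalar_mx_block _ _ _)).
split.
- apply: (@homog_ext _ _
    (fun j => match split j with inl a => -(@cdeg R Y a - 2 + 1) | inr b => -(@rdeg R Y b - 2 + 1) end) _
    (fun i => match split i with inl a => -(@cdeg R Y a + 1) + 2 | inr b => - @rdeg R Y b + 1 end)).
  + by move=> j /=; case: (split j).
  + by [].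
  apply: homog_block; [apply: homog_scalar => a; lia | exact: homog0 | exact: homog0 |].
  by apply: homog_diag => a; lia.
- by apply: homog_scalar => i /=; lia.
split; rewrite ?mulmx1 ?mul1mx; proj; simp.
- rewrite [RHS]block_mxEv -!mulmxA sgnK mulmx1 G4t G5t !mulmxN' !opprK.
  by rewrite mulmx1 mulmxA sgnK mul1mx.
- by rewrite [RHS]block_mxEv (mulmxA (sgn (@rdeg R Y)) (sgn (@rdeg R Y))) sgnK mul1mx.
- by [].
- rewrite !trmx_mul !mulmxA ?sgnK ?mul1mx.
  by rewrite -?(mulmxA _ (sgn _) (sgn _)) ?sgnK ?mulmx1.
- by [].
Qed.


Lemma sgn_tdeg X : sgn (@tdeg R X) =
  block_mx (block_mx (sgn (@cdeg R X)) 0 0 (- sgn (@cdeg R X))) 0 0 (sgn (@rdeg R X)).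
Proof. by rewrite /tdeg sgn_block sgn_block sgnS. Qed.

Lemma base X : good X -> S_iso (dualT (tot X)) (tot (dualS X)).
Proof.
case=> G1 _ _ _ _.
have G1t := congr1 trmx G1; rewrite trN !trmx_mul !tr_sgn in G1t.
exists (block_mx (block_mx 0 1%:M (sgn (@cdeg R X)) 0) 0 0 1%:M).
exists (block_mx (block_mx 0 (sgn (@cdeg R X)) 1%:M 0) 0 0 1%:M).
split.
- simp; rewrite sgnK -scalar_mx_block; exact: (esym (scalar_mx_block _ _ _)).
- simp; rewrite sgnK -scalar_mx_block; exact: (esym (scalar_mx_block _ _ _)).
- apply: (@homog_ext _ _
    (fun i => match split i with
      | inl j => match split j with inl a => - @cdeg R X a | inr b => -(@cdeg R X b + 1) end
      | inr k => - @rdeg R X k end) _ (@tdeg R (dualS X))).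
  + by move=> j; rewrite /= /tdeg; case: (split j) => // j'; case: (split j').
  + by [].
  apply: homog_block; [|exact: homog0|exact: homog0|apply: homog_scalar => a /=; lia].
  apply: homog_block; [exact: homog0| apply: homog_scalar => a /=; lia
    | apply: homog_diag => a /=; lia | exact: homog0].
- rewrite /= dualmxE sgn_tdeg /dtot; proj; simp.
  rewrite !block_mxEv -(mulmxA (sd X)^T) sgnK mulmx1 G1t.
  by rewrite !mulmxN' !opprK (mulmxA (sgn (@cdeg R X)) (sgn (@cdeg R X))) sgnK mul1mx.
- by rewrite /= dualmxE sgn_tdeg /chitot; simp; rewrite sgnK !block_mxEv !row_mx0.
Qed.


Lemma S_iso_trans (A B C : gcx R) : S_iso A B -> S_iso B C -> S_iso A C.
Proof.
case=> P [Q] [PQ QP hP Pd Pc]; case=> P2 [Q2] [PQ2 QP2 hP2 Pd2 Pc2].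
exists (P2 *m P), (Q *m Q2); split.
- by rewrite mulmxA -(mulmxA P2) PQ mulmx1 PQ2.
- by rewrite mulmxA -(mulmxA Q) QP2 mulmx1 QP.
- exact: homog_mul hP hP2.
- by rewrite -mulmxA Pd !mulmxA Pd2.
- by rewrite -mulmxA Pc !mulmxA Pc2.
Qed.

Lemma SI_refl X : SI X X.
Proof.
exists 1%:M, 1%:M, 1%:M, 1%:M; split; rewrite ?mulmx1 //.
split; [by apply: homog_scalar => i; lia | by apply: homog_scalar => i; lia |].
by split; rewrite ?mulmx1 ?mul1mx.
Qed.

Lemma good_iterS X k : good X -> good (iter k (@Sigma R) X).
Proof. by move=> G; elim: k => //= k IH; apply: good_Sigma. Qed.

Lemma good_iterSI X k : good X -> good (iter k (@SigmaInv R) X).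
Proof. by move=> G; elim: k => //= k IH; apply: good_SigmaInv. Qed.

Lemma key_pos X k : SI (dualS (iter k (@Sigma R) X)) (iter k (@SigmaInv R) (dualS X)).
Proof.
elim: k => [|k IH]; first exact: SI_refl.
exact: SI_trans (SI_dSigma _) (SI_SigmaInv IH).
Qed.

Lemma key_neg X k : good X -> SI (dualS (iter k (@SigmaInv R) X)) (iter k (@Sigma R) (dualS X)).
Proof.
move=> G; elim: k => [|k IH]; first exact: SI_refl.
exact: SI_trans (SI_dSigmaInv (good_iterSI k G)) (SI_Sigma IH).
Qed.

End S.

Unset Implicit Arguments.

Theorem proposition2p9 (R : comPzRingType) (X : Sdat R) (n : int) :
  is_Scomplex X ->
  S_iso (dualT (tot (SigmaZ n X))) (tot (SigmaZ (- n) (dualS X))).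
Proof.
move=> /good_of G; case: n => k.
- have -> : SigmaZ (- Posz k) (dualS X) = iter k (@SigmaInv R) (dualS X) by case: k.
  exact: S_iso_trans (base (good_iterS k G)) (SI_tot (key_pos X k)).
- have -> : SigmaZ (- Negz k) (dualS X) = iter k.+1 (@Sigma R) (dualS X) by [].
  exact: S_iso_trans (base (good_iterSI k.+1 G)) (SI_tot (key_neg k.+1 G)).
Qed.
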